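(* Let $X\trianglelefteq\widehat X$ be finite groups with natural epimorphism $\epsilon:\widehat X\to\widehat X/X$, and let $g,f,d\in\widehat X$ be such that $\epsilon(g)$ and $\epsilon(d)$ are involutions, $\widehat X/X$ is an abelian $2$-group, and $\widehat X/X=\langle\epsilon(d)\rangle\times\langle\epsilon(f)\rangle\times\langle\epsilon(g)\rangle$. Let $\chi\in\operatorname{Irr}(X)$ be $\widehat X$-invariant and such that some (equivalently every) $\delta\in\operatorname{Irr}(\chi^{\langle X,d\rangle})$ satisfies $\delta^f\ne\delta$. Then exactly one of the following holds: (i) $\chi$ extends to $\langle X,f,dg\rangle$ and does not extend to $\langle X,f,g\rangle$; (ii) $\chi$ extends to $\langle X,f,g\rangle$ and does not extend to $\langle X,f,dg\rangle$.
   Context: $\chi^{\langle X,d\rangle}$ denotes the induced character; $\delta^f(x)=\delta(fxf^{-1})$. *)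

(* Defs.v *)
From mathcomp Require Import all_boot all_order all_algebra all_fingroup all_solvable all_field all_character.
Set Implicit Arguments. Unset Strict Implicit. Unset Printing Implicit Defensive.
Import GRing.Theory Num.Theory.

Definition cfextends (gT : finGroupType) (X H : {group gT}) (chi : 'CF(X)) :=
  exists2 psi : 'CF(H), psi \is a character & ('Res[X] psi)%R = chi.

(* Main.v *)
Require Import Defs.
From mathcomp Require Import all_boot all_order all_algebra all_fingroup all_solvable all_field all_character.
Import GRing.Theory Num.Theory.
Set Implicit Arguments. Unset Strict Implicit. Unset Printing Implicit Defensive.

Module CycPart.
Local Open Scope ring_scope.

Section CycExt.
Variables (gT : finGroupType) (N G : {group gT}) (x : gT).
Hypotheses (sNG : N \subset G) (nNx : x \in 'N(N)%g) (sGNx : G \subset (N * <[x]>)%g).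

Let n := #[coset N x]%g.
Let n_gt0 : (0 < n)%N. Proof. exact: order_gt0. Qed.

Let Nxn : (x ^+ n)%g \in N.
Proof.
apply: coset_idr; first by rewrite groupX.
by rewrite morphX // expg_order.
Qed.

Let nNxk k : ((x ^+ k)^-1)%g \in 'N(N)%g.
Proof. by rewrite groupV groupX. Qed.

Section Rep.
Variables (m : nat) (rG : mx_representation algC N m.+1) (P : 'M[algC]_m.+1).
Hypothesis conjP : forall y, y \in N -> rG (y ^ x^-1)%g * P = P * rG y.
Hypothesis Pn : P ^+ n = rG (x ^+ n)%g.

Lemma conj_iter k y : y \in N -> rG (y ^ (x ^+ k)^-1)%g * P ^+ k = P ^+ k * rG y.
Proof.
elim: k y => [|k IH] y Ny; first by rewrite expg0 invg1 conjg1 expr0 mulr1 mul1r.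
rewrite expgS invMg conjgM exprS mulrA conjP; last by rewrite memJ_norm.
by rewrite -[LHS]mulrA IH // mulrA.
Qed.

Definition kk z := if [pick j : 'I_n | (z * (x ^+ j)^-1)%g \in N] is Some j then val j else 0%N.
Definition sig z := rG (z * (x ^+ kk z)^-1)%g * P ^+ kk z.

Lemma sigE z j : (z * (x ^+ j)^-1)%g \in N -> sig z = rG (z * (x ^+ j)^-1)%g * P ^+ j.
Proof.
move=> Nzj.
set q := (j %/ n)%N; set r := (j %% n)%N.
have xj : (x ^+ j = x ^+ (q * n) * x ^+ r)%g by rewrite -expgD -divn_eq.
have Nxqn : (x ^+ (q * n))%g \in N by rewrite mulnC expgM groupX.
have Nzr : (z * (x ^+ r)^-1)%g \in N.
  have -> : (z * (x ^+ r)^-1 = (z * (x ^+ j)^-1) * x ^+ (q * n))%g.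
    by rewrite xj invMg !mulgA mulgKV.
  by rewrite groupM.
have kkE : kk z = r.
  rewrite /kk; case: pickP => [j1 Hj1 | none]; last first.
    by have := none (Ordinal (ltn_pmod j n_gt0)); rewrite /= Nzr.
  have : ((x ^+ j1) * (x ^+ r)^-1)%g \in N.
    have -> : ((x ^+ j1) * (x ^+ r)^-1 = (z * (x ^+ j1)^-1)^-1 * (z * (x ^+ r)^-1))%g.
      by rewrite invMg invgK !mulgA mulgKV.
    by rewrite groupM ?groupV.
  move=> Nd.
  have : (coset N x ^+ j1 == coset N x ^+ r)%g.
    rewrite -!morphX // -(mulgKV (x ^+ r) (x ^+ j1))%g morphM ?groupM ?groupX ?groupV //.
    by rewrite (_ : coset_morphism N (x ^+ j1 * x ^- r)%g = 1%g) ?mul1g //; exact: coset_id.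
    by rewrite groupX.
  rewrite eq_expg_mod_order -/n => /eqP.
  by rewrite modn_mod modn_small // => ->.
rewrite /sig kkE.
have -> : (z * (x ^+ r)^-1 = (z * (x ^+ j)^-1) * x ^+ (q * n))%g.
  by rewrite xj invMg !mulgA mulgKV.
rewrite repr_mxMr // -mulrA; congr (_ * _).
rewrite [in RHS](divn_eq j n) -/q -/r exprD (mulnC q n) exprM Pn -repr_mxX //.
by rewrite -expgM (mulnC n q).
Qed.
Lemma decG z : z \in G -> exists e, (z * (x ^+ e)^-1)%g \in N.
Proof.
move=> /(subsetP sGNx) /mulsgP[y w Ny /cycleP[e ->] ->].
by exists e; rewrite mulgK.
Qed.

Lemma sig_repr : mx_repr G sig.
Proof.
split.
  by rewrite (@sigE 1%g 0) ?expg0 ?invg1 ?mulg1 ?group1 // repr_mx1 expr0 mulr1.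
move=> z1 z2 Gz1 Gz2.
have [e1 N1] := decG Gz1; have [e2 N2] := decG Gz2.
rewrite (sigE N1) (sigE N2) -!mulmxE.
set y1 := (z1 * _)%g in N1 *; set y2 := (z2 * _)%g in N2 *.
have N21 : (y2 ^ (x ^+ e1)^-1)%g \in N by rewrite memJ_norm.
have E : (z1 * z2 * (x ^+ (e1 + e2))^-1 = y1 * y2 ^ (x ^+ e1)^-1)%g.
  rewrite /y1 /y2 expgD conjgE invgK invMg !mulgA mulgKV; congr (_ * _)%g.
rewrite (@sigE (z1 * z2)%g (e1 + e2)); last by rewrite E groupM.
rewrite E repr_mxMr // exprD !mulmxE -!mulrA; congr (_ * _); rewrite !mulrA; congr (_ * _).
by rewrite conj_iter.
Qed.
End Rep.

Lemma cyc_ext (th : 'CF(N)) : th \in irr N -> (th ^ x)%CF = th ->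
  exists2 psi : 'CF(G), psi \is a character & 'Res[N] psi = th.
Proof.
case/irr_reprP=> [[m rG] irrG ->] /= thx.
case: m rG irrG thx => [|m] rG irrG thx.
  by have [] := (mx_irrP _).1 irrG.
pose r2 y := rG (y ^ x^-1)%g.
have r2_repr : mx_repr N r2.
  split; first by rewrite /r2 conj1g repr_mx1.
  move=> y z Ny Nz; rewrite /r2 conjMg repr_mxM // memJ_norm // groupV //.
pose rr2 := MxRepresentation r2_repr.
have : cfRepr rr2 == cfRepr rG.
  apply/eqP/cfun_inP=> y Ny; rewrite -thx cfConjgE // !cfunE Ny memJ_norm ?groupV // Ny; reflexivity.
case/cfRepr_rsimP=> B _ rfB hB.
have Bu : B \in unitmx by rewrite -row_free_unit.
have conjB : forall y, y \in N -> rG (y ^ x^-1)%g * B = B * rG y.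
  by move=> y Ny; rewrite -!mulmxE; apply: hB.
pose R := rG (x ^+ n)%g.
have Ru : R \is a GRing.unit by apply: repr_mx_unitr.
pose C := R^-1 * B ^+ n.
have cC : centgmx rG C.
  apply/centgmxP=> y Ny; rewrite !mulmxE.
  have := conj_iter conjB n Ny.
  rewrite conjgE invgK repr_mxMr ?groupM ?groupV // repr_mxMr ?groupV // (repr_mxVr rG Nxn) -/R.
  by rewrite /C => h; rewrite -[_ * rG y]mulrA -h !mulrA mulVr // mul1r.
have [c Cc] := is_scalar_mxP (mx_abs_irr_cent_scalar (groupC irrG) cC).
have BnE : B ^+ n = c *: R.
  by rewrite -mul_mx_scalar -Cc mulmxE /C mulrA mulrV // mul1r.
have c0 : c != 0.
  apply: contraTneq (unitrX n (Bu : B \is a GRing.unit)) => c0.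
  by rewrite BnE c0 scale0r unitr0.
set r := n.-root c.
have rn : r ^+ n = c by rewrite /r rootCK.
have r0 : r != 0 by apply: contraNneq c0 => r0; rewrite -rn r0 expr0n gtn_eqF.
pose P := r^-1 *: B.
have conjP : forall y, y \in N -> rG (y ^ x^-1)%g * P = P * rG y.
  by move=> y Ny; rewrite /P -scalerAr conjB // scalerAl.
have Pn : P ^+ n = rG (x ^+ n)%g.
  by rewrite /P exprZn BnE scalerA exprVn rn mulVf // scale1r.
exists (cfRepr (MxRepresentation (sig_repr conjP Pn))); first exact: cfRepr_char.
apply/cfun_inP=> y Ny; rewrite cfResE // !cfunE Ny (subsetP sNG) //=.
by rewrite (@sigE _ _ _ _ y 0) ?expg0 ?invg1 ?mulg1 // expr0 mulr1.
Qed.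
End CycExt.

End CycPart.
Import CycPart.

Section Amb.
Variables (gT : finGroupType) (X Xh : {group gT}).
Hypotheses (nsXXh : (X <| Xh)%g) (abQ : abelian (Xh / X)%g).

Let nXXh : (Xh \subset 'N(X))%g. Proof. exact: normal_norm. Qed.

Lemma abQc a b : a \in (Xh / X)%g -> b \in (Xh / X)%g -> commute a b.
Proof. by move=> Ha Hb; apply: (centsP abQ a Ha b Hb). Qed.

Lemma commX y z : y \in Xh -> z \in Xh -> ([~ y, z] \in X)%g.
Proof.
move=> Xy Xz; have nXy := subsetP nXXh y Xy; have nXz := subsetP nXXh z Xz.
apply: coset_idr; first by rewrite groupR.
rewrite morphR //; apply/eqP/commgP.
by apply: abQc; rewrite mem_quotient.
Qed.

Lemma normXh (H : {group gT}) y : (X \subset H)%g -> (H \subset Xh)%g -> y \in Xh -> y \in ('N(H))%g.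
Proof.
move=> sXH sHXh Xy; rewrite inE; apply/subsetP=> _ /imsetP[h Hh ->].
rewrite conjg_mulR groupM // (subsetP sXH) // commX // (subsetP sHXh) //.
Qed.

Lemma centXh (H : {group gT}) y : (H \subset Xh)%g -> y \in Xh -> (coset X y \in 'C(H / X))%g.
Proof.
move=> sHXh Xy; apply/centP=> _ /morphimP[h Nh Hh ->].
apply: abQc; rewrite ?mem_quotient // (subsetP sHXh) //.
Qed.

Lemma conjmod (H : {group gT}) y (b : Iirr (H / X)) :
  (X \subset H)%g -> (H \subset Xh)%g -> y \in Xh ->
  ((('chi_b)%R %% X) ^ y)%CF = (('chi_b)%R %% X)%CF.
Proof.
move=> sXH sHXh Xy.
rewrite cfConjgMod_norm ?(subsetP nXXh) ?normXh //.
by rewrite inertiaJ // (subsetP (cent_sub_inertia _)) // centXh.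
Qed.
End Amb.

Section Gal.
Variables (gT : finGroupType).

Lemma galc (X H : {group gT}) (chi : 'CF(X)) (th : 'CF(H)) (i : Iirr H) :
  (X <| H)%g -> chi \in irr X -> th \in irr H -> ('Res[X] th = chi)%R ->
  i \in irr_constt ('Ind[H] chi)%R ->
  exists b : Iirr (H / X), ('chi_i)%R = ((('chi_b)%R %% X)%CF * th)%R.
Proof.
move=> nsXH /irrP[t ->] /irrP[c ->] cNt.
have [irrM _ consttE _] := constt_Ind_ext nsXH cNt.
rewrite consttE => /codomP[b ->]; exists b.
by rewrite /mul_mod_Iirr /mul_Iirr cfIirrE ?irrM // mod_IirrE.
Qed.

Lemma gal (X H : {group gT}) (chi : 'CF(X)) (th th' : 'CF(H)) :
  (X <| H)%g -> chi \in irr X -> th \in irr H -> th' \in irr H ->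
  ('Res[X] th = chi)%R -> ('Res[X] th' = chi)%R ->
  exists b : Iirr (H / X), th' = ((('chi_b)%R %% X)%CF * th)%R.
Proof.
move=> nsXH irrchi irrth /irrP[c' ->] cNt cNt'.
apply: (galc nsXH irrchi irrth cNt).
have [t Dt] := irrP irrchi.
by rewrite Dt constt_Ind_Res cNt' Dt irr_consttE cfnorm_irr oner_eq0.
Qed.

Lemma gal_inj (X H : {group gT}) (chi : 'CF(X)) (th : 'CF(H)) (b : Iirr (H / X)) :
  (X <| H)%g -> chi \in irr X -> th \in irr H -> ('Res[X] th = chi)%R ->
  ((('chi_b)%R %% X)%CF * th)%R = th -> b = 0%R.
Proof.
move=> nsXH /irrP[t ->] /irrP[c ->] cNt h.
have [_ inj _ _] := constt_Ind_ext nsXH cNt.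
apply: inj; rewrite /mul_mod_Iirr /mul_Iirr mod_IirrE // h.
by rewrite mod_Iirr0 irr0 mul1r irrK.
Qed.

Lemma cyc2 (A : {group gT}) (a : gT) (phi psi : 'CF(A)) :
  (forall w, w \in A -> exists e, w = (a ^+ e)%g) -> a \in A ->
  phi \is a linear_char -> psi \is a linear_char ->
  (phi * phi = 1)%R -> (psi * psi = 1)%R -> phi != 1%R -> psi != 1%R -> phi = psi.
Proof.
move=> hA Aa.
have val1 (xi : 'CF(A)) : xi \is a linear_char -> (xi * xi = 1)%R -> xi != 1%R -> (xi a = -1)%R.
  move=> lxi sq n1.
  have : (xi a ^+ 2 == 1)%R.
    have := congr1 (fun f : 'CF(A) => f a) sq; rewrite /= cfunE cfun1E Aa => h.
    by rewrite expr2 h.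
  rewrite sqrf_eq1 => /orP[/eqP xa1 | /eqP //].
  case/negP: n1; apply/eqP/cfun_inP=> w Aw; have [e ->] := hA w Aw.
  by rewrite lin_charX // xa1 expr1n cfun1E groupX.
move=> lphi lpsi sphi spsi nphi npsi.
apply/cfun_inP=> w Aw; have [e ->] := hA w Aw.
by rewrite !lin_charX // !val1.
Qed.
End Gal.

Lemma in_joinl (gT : finGroupType) (H : {group gT}) x z : z \in H -> z \in (H <*> <[x]>)%G.
Proof. by move=> Hz; rewrite (subsetP (joing_subl _ _)). Qed.
Lemma in_joinr (gT : finGroupType) (H : {group gT}) x : x \in (H <*> <[x]>)%G.
Proof. by rewrite (subsetP (joing_subr _ _)) // cycle_id. Qed.

Unset Implicit Arguments.
Theorem lemma6p1 (gT : finGroupType) (X Xh : {group gT}) (g f d : gT)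
  (chi : 'CF(X)) :
  (X <| Xh)%g -> g \in Xh -> f \in Xh -> d \in Xh ->
  #[coset X g]%g = 2%N -> #[coset X d]%g = 2%N ->
  abelian (Xh / X)%g -> (2.-group (Xh / X))%g ->
  (<[coset X d]> \x <[coset X f]> \x <[coset X g]>)%g = (Xh / X)%g ->
  chi \in irr X ->
  (forall y, y \in Xh -> (chi ^ y)%CF = chi) ->
  (exists2 i : Iirr <<X :|: [set d]>>,
      i \in irr_constt (('Ind[<<X :|: [set d]>>] chi)%R) & (('chi_i)%R ^ f)%CF != ('chi_i)%R) ->
  (cfextends <<X :|: [set f; (d * g)%g]>>%G chi /\ ~ cfextends <<X :|: [set f; g]>>%G chi)
  \/
  (cfextends <<X :|: [set f; g]>>%G chi /\ ~ cfextends <<X :|: [set f; (d * g)%g]>>%G chi).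
Proof.
move=> nsXXh Xg Xf Xd og od abQ _ _ irrchi chiinv [i consti chif].
have sXXh := normal_sub nsXXh; have nXXh := normal_norm nsXXh.
set F := <<X :|: [set f]>>%G; set D := <<X :|: [set d]>>%G.
set K1 := <<X :|: [set f; g]>>%G; set K2 := <<X :|: [set f; (d * g)%g]>>%G.
have Xdg : (d * g)%g \in Xh by rewrite groupM.
have genXh (S : {set gT}) : S \subset Xh -> (<<X :|: S>> \subset Xh)%g.
  by move=> sS; rewrite gen_subG subUset sXXh.
have sX (S : {set gT}) : (X \subset <<X :|: S>>)%g.
  exact: subset_trans (subsetUl _ _) (sub_gen _).
have sFXh : (F \subset Xh)%g by rewrite genXh // sub1set.
have sDXh : (D \subset Xh)%g by rewrite genXh // sub1set.
have sK1Xh : (K1 \subset Xh)%g.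
  by rewrite genXh //; apply/subsetP=> z /set2P[]->.
have sK2Xh : (K2 \subset Xh)%g.
  by rewrite genXh //; apply/subsetP=> z /set2P[]->.
have sXF : (X \subset F)%g := sX _.
have Ff : f \in F by rewrite mem_gen // !inE eqxx orbT.
have sFK1 : (F \subset K1)%g.
  by rewrite gen_subG subUset sX sub1set mem_gen // !inE eqxx orbT.
have sFK2 : (F \subset K2)%g.
  by rewrite gen_subG subUset sX sub1set mem_gen // !inE eqxx orbT.
have K1g : g \in K1 by rewrite mem_gen // !inE eqxx !orbT.
have K2dg : (d * g)%g \in K2 by rewrite mem_gen // !inE eqxx !orbT.
have nXh (H : {group gT}) y : (X \subset H)%g -> (H \subset Xh)%g -> y \in Xh -> y \in 'N(H)%g.
  exact: (normXh nsXXh abQ).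
have nF y : y \in Xh -> y \in 'N(F)%g by move=> Xy; apply: nXh.
have nsXF : (X <| F)%g := normalS sXF sFXh nsXXh.
have nsFXh : (F <| Xh)%g by rewrite /normal sFXh; apply/subsetP=> y /nF.
have FXf : (F \subset X * <[f]>)%g.
  rewrite -norm_joinEr ?cycle_subG ?(subsetP nXXh) // gen_subG subUset joing_subl.
  by rewrite sub1set in_joinr.
have resT (H : {group gT}) (psi : 'CF(H)) :
    (F \subset H)%g -> ('Res[F] psi)%R \in irr F -> ('Res[X] ('Res[F] psi) = 'Res[X] psi)%R.
  by move=> sFH _; rewrite cfResRes.
have irrRes (H : {group gT}) (psi : 'CF(H)) :
    (X \subset H)%g -> psi \is a character -> ('Res[X] psi = chi)%R -> psi \in irr H.
  by move=> sXH chpsi rpsi; apply: (cfRes_irr_irr (H := X) chpsi); rewrite rpsi.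
have notd (th : 'CF(F)) : th \in irr F -> ('Res[X] th = chi)%R -> (th ^ d)%CF != th.
  move=> irrth resth; apply/eqP => thd.
  pose L := (F <*> <[d]>)%G.
  have sFL : (F \subset L)%g := joing_subl _ _.
  have LFd : (L \subset F * <[d]>)%g by rewrite /L /= norm_joinEr // cycle_subG nF.
  have [Th chTh resTh] := cyc_ext sFL (nF d Xd) LFd irrth thd.
  have sDL : (D \subset L)%g.
    by rewrite gen_subG subUset (subset_trans sXF sFL) sub1set in_joinr.
  have sXD : (X \subset D)%g := sX _.
  pose dl := ('Res[D] Th)%R.
  have resdl : ('Res[X] dl = chi)%R.
    by rewrite /dl cfResRes // -(cfResRes _ sXF sFL) resTh.
  have irrdl : dl \in irr D by apply: (irrRes _ _ sXD) => //; apply: cfRes_char.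
  have dlf : (dl ^ f)%CF = dl.
    rewrite /dl cfConjgRes_norm ?(nXh D) ?(subsetP (normG L)) ?in_joinl //.
    by rewrite cfConjg_id // in_joinl.
  have nsXD : (X <| D)%g := normalS sXD sDXh nsXXh.
  have [b Eb] := galc nsXD irrchi irrdl resdl consti.
  move: chif; rewrite Eb rmorphM /= (conjmod nsXXh abQ) // dlf eqxx //.
have partB : cfextends K1 chi -> cfextends K2 chi -> False.
  move=> [p1 ch1 r1] [p2 ch2 r2].
  pose t1 := ('Res[F] p1)%R; pose t2 := ('Res[F] p2)%R.
  have rt1 : ('Res[X] t1 = chi)%R by rewrite /t1 cfResRes.
  have rt2 : ('Res[X] t2 = chi)%R by rewrite /t2 cfResRes.
  have it1 : t1 \in irr F by apply: (irrRes _ _ sXF) => //; apply: cfRes_char.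
  have it2 : t2 \in irr F by apply: (irrRes _ _ sXF) => //; apply: cfRes_char.
  have t1g : (t1 ^ g)%CF = t1.
    by rewrite /t1 cfConjgRes_norm ?nF ?(subsetP (normG K1)) // cfConjg_id.
  have t2dg : (t2 ^ (d * g))%CF = t2.
    by rewrite /t2 cfConjgRes_norm ?nF ?(subsetP (normG K2)) // cfConjg_id.
  have [b Eb] := gal nsXF irrchi it1 it2 rt1 rt2.
  have t2g : (t2 ^ g)%CF = t2.
    by rewrite {1}Eb rmorphM /= (conjmod nsXXh abQ) // t1g -Eb.
  have t2d : (t2 ^ d)%CF = t2.
    move: t2dg; rewrite (cfConjgM _ nsFXh) // -{2}t2g.
    exact: (can_inj (cfConjgK g)).
  by move/eqP: t2d; apply/negP/notd.
have [th chth resth] := cyc_ext sXF (subsetP nXXh f Xf) FXf irrchi (chiinv f Xf).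
have irrth : th \in irr F by apply: (irrRes _ _ sXF).
have conjext y : y \in Xh -> (th ^ y)%CF \in irr F /\ ('Res[X] (th ^ y)%CF = chi)%R.
  move=> Xy; split; first exact: cfConjg_irr.
  by rewrite -cfConjgRes_norm ?(subsetP nXXh) ?nF // resth chiinv.
have [bg Eg] := gal nsXF irrchi irrth (conjext g Xg).1 resth (conjext g Xg).2.
have [bd Ed] := gal nsXF irrchi irrth (conjext d Xd).1 resth (conjext d Xd).2.
have abF : abelian (F / X)%g := abelianS (quotientS X sFXh) abQ.
have linF (b : Iirr (F / X)) : ('chi_b)%R \is a linear_char by apply/char_abelianP.
have sq y (b : Iirr (F / X)) : y \in Xh -> (y * y)%g \in X ->
    (th ^ y)%CF = ((('chi_b)%R %% X)%CF * th)%R -> (('chi_b)%R * ('chi_b)%R = 1)%R.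
  move=> Xy Xyy Ey.
  have : (th ^ (y * y))%CF = th by rewrite cfConjg_id // (subsetP sXF).
  rewrite (cfConjgM _ nsFXh) // Ey rmorphM /= (conjmod nsXXh abQ) // Ey mulrA -rmorphM.
  have lin2 : (('chi_b)%R * ('chi_b)%R)%R \is a linear_char by rewrite rpredM.
  set c := cfIirr (('chi_b)%R * ('chi_b)%R)%R.
  have Ec : ('chi_c)%R = (('chi_b)%R * ('chi_b)%R)%R := cfIirrE (lin_char_irr lin2).
  rewrite -Ec => /(gal_inj nsXF irrchi irrth resth) c0.
  by rewrite c0 irr0.
have sqX y : y \in Xh -> #[coset X y]%g = 2%N -> (y * y)%g \in X.
  move=> Xy oy; apply: coset_idr; first by rewrite groupM ?(subsetP nXXh).
  by rewrite morphM ?(subsetP nXXh) //; move: (expg_order (coset X y)); rewrite oy expgS expg1.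
case: (eqVneq bg 0%R) => [bg0 | bgn0].
  have thg : (th ^ g)%CF = th by rewrite Eg bg0 irr0 rmorph1 mul1r.
  have K1Fg : (K1 \subset F * <[g]>)%g.
    rewrite -norm_joinEr ?cycle_subG ?nF // gen_subG subUset (subset_trans sXF (joing_subl _ _)).
    by apply/subsetP=> z /set2P[]->; rewrite ?in_joinr ?in_joinl.
  have [p1 ch1 r1] := cyc_ext sFK1 (nF g Xg) K1Fg irrth thg.
  have e1 : cfextends K1 chi by exists p1; rewrite // -(cfResRes _ sXF sFK1) r1.
  by right; split=> // /(partB e1).
have bdn0 : bd != 0%R.
  apply: contraNneq (notd th irrth resth) => bd0.
  by rewrite Ed bd0 irr0 rmorph1 mul1r.
have hA w : w \in (F / X)%g -> exists e, w = (coset X f ^+ e)%g.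
  case/morphimP=> z Nz Fz ->.
  have /mulsgP[y u Xy /cycleP[e ->] ->] := subsetP FXf z Fz.
  have nXf : f \in 'N(X)%g := subsetP nXXh f Xf.
  exists e; rewrite morphM; last 2 first.
    - exact: subsetP (normG X) y Xy.
    - by rewrite groupX.
  rewrite (_ : coset_morphism X y = 1%g) ?mul1g; last exact: coset_id.
  by rewrite morphX.
have sqg := sq g bg Xg (sqX g Xg og) Eg.
have Eb : ('chi_bd)%R = ('chi_bg)%R.
  apply: (cyc2 hA (mem_quotient X Ff) (linF bd) (linF bg)) => //;
    rewrite ?irr_eq1 //.
  exact: (sq d bd Xd (sqX d Xd od) Ed).
have thdg : (th ^ (d * g))%CF = th.
  rewrite (cfConjgM _ nsFXh) // Ed rmorphM /= (conjmod nsXXh abQ) // Eg mulrA.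
  by rewrite -rmorphM Eb sqg rmorph1 mul1r.
have K2Fdg : (K2 \subset F * <[d * g]>)%g.
  rewrite -norm_joinEr ?cycle_subG ?nF // gen_subG subUset (subset_trans sXF (joing_subl _ _)).
  by apply/subsetP=> z /set2P[]->; rewrite ?in_joinr ?in_joinl.
have [p2 ch2 r2] := cyc_ext sFK2 (nF _ Xdg) K2Fdg irrth thdg.
have e2 : cfextends K2 chi by exists p2; rewrite // -(cfResRes _ sXF sFK2) r2.
by left; split=> // /partB; apply.
Qed.
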